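(* In the work extraction game described in the context, fix an initial state $\rho$ (energies $E_1,\dots,E_d$, occupation probabilities $\lambda_1,\dots,\lambda_d$), a final state $\sigma$ (energies $F_1,\dots,F_d$, occupation probabilities $\nu_1,\dots,\nu_d$), a number $\varepsilon\in[0,1)$ and a threshold $W\in\mathbb{R}$. Suppose a strategy $\mathcal S$ satisfies the following. It starts from the energies $E$ with the initial level distributed according to $\lambda$. It ends with the energies $F$. It succeeds, meaning that the total extracted work satisfies $W_{\rm tot}\ge W$, with probability at least $1-\varepsilon$. Conditioned on success, the final occupied level is distributed according to $\nu$. Then $$W\le W^\varepsilon(\rho\to\sigma)=kT\ln M\!\left(\tfrac{G^T(\rho)}{1-\varepsilon}\,\Big\|\,G^T(\sigma)\right).$$
   Context: Conventions. The constants $k>0$ (Boltzmann's constant) and $T>0$ (temperature) are fixed. A state is a finite-level system with energies $E_1,\dots,E_d\in\mathbb{R}\cup\{+\infty\}$, not all $+\infty$, together with a diagonal density matrix $\rho=\sum_i\lambda_i|e_i\rangle\langle e_i|$. Equivalently, it is a probability vector $(\lambda_i)$ over the levels, and we require $\lambda_i=0$ whenever $E_i=+\infty$. Gibbs rescaling. $G^T(\rho)$ is the function on $[0,\infty)$ built as follows. Each level $i$ with $E_i<\infty$ is represented by a block: an interval of length $e^{-E_i/kT}$ on which the function takes the constant value $\lambda_i e^{E_i/kT}$, so the block has area $\lambda_i$. The blocks are placed consecutively starting at $0$, in order of nonincreasing height. The function is $0$ beyond $Z=\sum_{i:E_i<\infty}e^{-E_i/kT}$. Thus $G^T(\rho)$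 is a nonincreasing probability density supported in $[0,Z]$. Relative mixedness. For nonincreasing integrable functions $f,g\ge 0$ on $[0,\infty)$, $$M(f\|g):=\max\Big\{m>0:\ \int_0^l f(x)\,dx\ge\int_0^{lm}g(x)\,dx\ \text{for all } l\ge 0\Big\}.$$ For $\varepsilon\in[0,1)$ define $$W^\varepsilon(\rho\to\sigma):=kT\ln M\big(G^T(\rho)/(1-\varepsilon)\,\big\|\,G^T(\sigma)\big).$$ Work extraction game. - A working medium has levels $1,\dots,d$. At each time it has an energy assignment $E\in(\mathbb{R}\cup\{+\infty\})^d$ and occupies exactly one (random) level. - For an assignment $E$, the Gibbs vector is $\gamma_E(i)=e^{-E_i/kT}/\sum_j e^{-E_j/kT}$, which is $0$ for levels at $+\infty$. - A strategy is a finite sequence of elementary steps, fixed in advance and independent of the random outcomes. Each step is one of two kinds. - (i) Thermalisation. Choose a $d\times d$ column-stochastic matrix $B$ with $B\gamma_E=\gamma_E$ for the current energies $E$. If the current level is $j$, the new level is $i$ with probability $B_{ij}$. Energies are unchanged and no work is exchanged. - (ii) Energy change. Choose a set $S$ of levels and new values for the energies of the levels in $S$; the other energies are unchanged and the occupied level is unchanged. If the occupied level $i$ lies in $S$, the work reservoir receives extracted work $E_i^{\rm old}-E_i^{\rm new}$; otherwise it receives $0$. (The paper changes all levels in $S$ by a common amount; arbitrary changes are compositions of such steps.) - The total extracted work $W_{\rm tot}$ is the sum over steps. By convention, a realisation in which some step yields work $-\infty$ (an occupied level raised to $+\infty$) has $W_{\rm tot}=-\infty$. - A run is successful for threshold $W$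 if $W_{\rm tot}\ge W$. *)

(* Defs.v *)
From Stdlib Require Import Reals Lra Lia List.
Import ListNotations.
Open Scope R_scope.

(* Energies take values in R u {+oo}: [Some a] is a finite energy a, [None] is +oo.
   Levels of a d-level system are the naturals 0 .. d-1; values of the
   functions at indices >= d are irrelevant. *)
Definition energy := option R.

Fixpoint rsum (n : nat) (f : nat -> R) : R :=
  match n with O => 0 | S m => rsum m f + f m end.

Definition is_state (d : nat) (E : nat -> energy) (lam : nat -> R) : Prop :=
  (exists i, (i < d)%nat /\ E i <> None) /\
  (forall i, (i < d)%nat -> 0 <= lam i) /\
  rsum d lam = 1 /\
  (forall i, (i < d)%nat -> E i = None -> lam i = 0).

Definition bwidth (k T : R) (e : energy) : R :=
  match e with Some a => exp (- a / (k * T)) | None => 0 end.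

Definition bheight (k T : R) (e : energy) (p : R) : R :=
  match e with Some a => p * exp (a / (k * T)) | None => 0 end.

(* Block j is placed before block i: order of nonincreasing height,
   ties broken by the index (the resulting function does not depend on
   the tie-breaking). Only finite levels have blocks. *)
Definition before (k T : R) (E : nat -> energy) (lam : nat -> R) (j i : nat) : bool :=
  match E j with
  | None => false
  | Some _ =>
      if Rlt_dec (bheight k T (E i) (lam i)) (bheight k T (E j) (lam j)) then true
      else if Req_EM_T (bheight k T (E j) (lam j)) (bheight k T (E i) (lam i))
           then Nat.ltb j i else false
  end.

Definition bstart (k T : R) (d : nat) (E : nat -> energy) (lam : nat -> R) (i : nat) : R :=
  rsum d (fun j => if before k T E lam j i then bwidth k T (E j) else 0).

(* G^T(rho) as a function on R (it vanishes on x < 0 and beyond Z). *)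
Definition gibbs_rescaling (k T : R) (d : nat) (E : nat -> energy) (lam : nat -> R)
  (x : R) : R :=
  rsum d (fun i =>
    match E i with
    | None => 0
    | Some _ =>
        if Rle_dec (bstart k T d E lam i) x then
          if Rlt_dec x (bstart k T d E lam i + bwidth k T (E i)) then
            bheight k T (E i) (lam i)
          else 0
        else 0
    end).

Definition integral0 (f : R -> R) (l v : R) : Prop :=
  exists pr : Riemann_integrable f 0 l, RiemannInt pr = v.

Definition mixedness_admissible (f g : R -> R) (m : R) : Prop :=
  0 < m /\
  forall l, 0 <= l ->
    exists v1 v2, integral0 f l v1 /\ integral0 g (l * m) v2 /\ v2 <= v1.

Definition is_rel_mixedness (f g : R -> R) (Mv : R) : Prop :=
  mixedness_admissible f g Mv /\
  (forall m, mixedness_admissible f g m -> m <= Mv).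

(* Elementary steps: thermalisation with a matrix B (B i j = prob j -> i),
   or an energy change to a new assignment E' (levels with E' i = E i are
   unchanged; arbitrary simultaneous changes are compositions of the
   paper's elementary changes). *)
Inductive step : Type :=
| Therm (B : nat -> nat -> R)
| Change (E' : nat -> energy).

Definition strategy := list step.

Definition gibbs_vec (k T : R) (d : nat) (E : nat -> energy) (i : nat) : R :=
  bwidth k T (E i) / rsum d (fun j => bwidth k T (E j)).

Definition col_stochastic (d : nat) (B : nat -> nat -> R) : Prop :=
  (forall i j, (i < d)%nat -> (j < d)%nat -> 0 <= B i j) /\
  (forall j, (j < d)%nat -> rsum d (fun i => B i j) = 1).

Definition preserves_gibbs (k T : R) (d : nat) (E : nat -> energy) (B : nat -> nat -> R) : Prop :=
  forall i, (i < d)%nat ->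
    rsum d (fun j => B i j * gibbs_vec k T d E j) = gibbs_vec k T d E i.

Fixpoint valid_strategy (k T : R) (d : nat) (E : nat -> energy) (S : strategy) : Prop :=
  match S with
  | nil => True
  | Therm B :: S' => col_stochastic d B /\ preserves_gibbs k T d E B /\ valid_strategy k T d E S'
  | Change E' :: S' => valid_strategy k T d E' S'
  end.

Fixpoint final_energies (E : nat -> energy) (S : strategy) : nat -> energy :=
  match S with
  | nil => E
  | Therm _ :: S' => final_energies E S'
  | Change E' :: S' => final_energies E' S'
  end.

(* Extracted work of the occupied level going from energy eo to en;
   None stands for work -oo (a failed realisation). *)
Definition step_work (eo en : energy) : option R :=
  match eo, en with
  | Some a, Some b => Some (a - b)
  | Some _, None => None          (* occupied level raised to +oo *)
  | None, None => Some 0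
  | None, Some _ => None          (* only on failed / probability-0 paths *)
  end.

Definition oadd (a b : option R) : option R :=
  match a, b with Some x, Some y => Some (x + y) | _, _ => None end.

(* an outcome: (probability weight, final level, total work (None = -oo)) *)
Definition outcome := (R * nat * option R)%type.

Definition scale_out (p : R) (o : outcome) : outcome :=
  match o with (q, l, w) => (p * q, l, w) end.

Definition addw_out (a : option R) (o : outcome) : outcome :=
  match o with (q, l, w) => (q, l, oadd a w) end.

Fixpoint run (d : nat) (E : nat -> energy) (S : strategy) (i : nat) : list outcome :=
  match S with
  | nil => [(1, i, Some 0)]
  | Therm B :: S' =>
      flat_map (fun j => map (scale_out (B j i)) (run d E S' j)) (seq 0 d)
  | Change E' :: S' =>
      map (addw_out (step_work (E i) (E' i))) (run d E' S' i)
  end.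

Definition outcomes (d : nat) (E : nat -> energy) (lam : nat -> R) (S : strategy) : list outcome :=
  flat_map (fun i => map (scale_out (lam i)) (run d E S i)) (seq 0 d).

Definition successful (W : R) (w : option R) : bool :=
  match w with Some x => if Rle_dec W x then true else false | None => false end.

Definition prob_success (d : nat) (E : nat -> energy) (lam : nat -> R) (S : strategy) (W : R) : R :=
  fold_right (fun o acc => match o with (q, _, w) => (if successful W w then q else 0) + acc end)
    0 (outcomes d E lam S).

Definition prob_success_at (d : nat) (E : nat -> energy) (lam : nat -> R) (S : strategy) (W : R)
  (i : nat) : R :=
  fold_right (fun o acc => match o with (q, l, w) =>
      (if successful W w then if Nat.eqb l i then q else 0 else 0) + acc end)
    0 (outcomes d E lam S).

(* Main.v *)
Require Import Defs.
From Coquelicot Require Import Coquelicot.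
From Stdlib Require Import Reals Lra Lia List Classical.
Import ListNotations.
Open Scope R_scope.

Lemma rsum_ext n f g : (forall i, (i < n)%nat -> f i = g i) -> rsum n f = rsum n g.
Proof. induction n; simpl; intros H; auto. rewrite IHn by (intros; apply H; lia). rewrite H by lia. auto. Qed.

Lemma rsum_le n f g : (forall i, (i < n)%nat -> f i <= g i) -> rsum n f <= rsum n g.
Proof. induction n; simpl; intros H; [lra|]. assert (f n <= g n) by (apply H; lia).
  assert (rsum n f <= rsum n g) by (apply IHn; intros; apply H; lia). lra. Qed.

Lemma rsum_plus n f g : rsum n (fun i => f i + g i) = rsum n f + rsum n g.
Proof. induction n; simpl; [lra|]. rewrite IHn; lra. Qed.

Lemma rsum_scal n c f : rsum n (fun i => c * f i) = c * rsum n f.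
Proof. induction n; simpl; [lra|]. rewrite IHn; lra. Qed.

Lemma rsum_zero n f : (forall i, (i < n)%nat -> f i = 0) -> rsum n f = 0.
Proof. intros H. rewrite (rsum_ext n f (fun _ => 0)) by auto. clear. induction n; simpl; lra. Qed.

Lemma rsum_nonneg n f : (forall i, (i < n)%nat -> 0 <= f i) -> 0 <= rsum n f.
Proof. intros H. replace 0 with (rsum n (fun _ => 0)). apply rsum_le; auto.
  clear; induction n; simpl; lra. Qed.

Lemma rsum_single n k a : (k < n)%nat -> rsum n (fun i => if Nat.eqb i k then a else 0) = a.
Proof. induction n; intros H; [lia|]. simpl. destruct (Nat.eqb_spec n k).
  - subst. rewrite rsum_zero. lra. intros i Hi. destruct (Nat.eqb_spec i k); [lia|auto].
  - rewrite IHn by lia. lra. Qed.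

Lemma rsum_swap n m (f : nat -> nat -> R) :
  rsum n (fun i => rsum m (fun j => f i j)) = rsum m (fun j => rsum n (fun i => f i j)).
Proof. induction n; simpl. - symmetry; apply rsum_zero; auto.
  - rewrite IHn. rewrite <- rsum_plus. auto. Qed.

Definition ppos (x : R) := Rmax 0 x.
Lemma pos_ge0 x : 0 <= ppos x. Proof. unfold ppos; apply Rmax_l. Qed.
Lemma pos_ge x : x <= ppos x. Proof. unfold ppos; apply Rmax_r. Qed.
Lemma pos_of_nonneg x : 0 <= x -> ppos x = x. Proof. unfold ppos; intros; rewrite Rmax_right; lra. Qed.
Lemma pos_of_nonpos x : x <= 0 -> ppos x = 0. Proof. unfold ppos; intros; rewrite Rmax_left; lra. Qed.
Lemma pos_scal c x : 0 <= c -> ppos (c * x) = c * ppos x.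
Proof. intros. destruct (Rle_dec 0 x). rewrite !pos_of_nonneg; nra.
  rewrite !pos_of_nonpos; nra. Qed.
Lemma pos_mono x y : x <= y -> ppos x <= ppos y.
Proof. unfold ppos, Rmax. intros. repeat destruct Rle_dec; lra. Qed.

Fixpoint argmax (f : nat -> R) (n : nat) : nat :=
  match n with O => O | S m => match m with O => O | _ =>
     if Rle_dec (f (argmax f m)) (f m) then m else argmax f m end end.

Lemma argmax_spec f n : (0 < n)%nat -> (argmax f n < n)%nat /\ forall i, (i < n)%nat -> f i <= f (argmax f n).
Proof. induction n; intros H; [lia|]. destruct n.
  - simpl. split; [lia|]. intros i Hi. replace i with 0%nat by lia. lra.
  - destruct IHn as [IH1 IH2]; [lia|]. change (argmax f (S (S n))) with
      (if Rle_dec (f (argmax f (S n))) (f (S n)) then S n else argmax f (S n)).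
    destruct (Rle_dec (f (argmax f (S n))) (f (S n))).
    + split; [lia|]. intros i Hi. destruct (Nat.eq_dec i (S n)); [subst; lra|].
      assert (f i <= f (argmax f (S n))) by (apply IH2; lia). lra.
    + split; [lia|]. intros i Hi. destruct (Nat.eq_dec i (S n)); [subst; lra|]. apply IH2; lia.
Qed.

Lemma exp_le_mono x y : x <= y -> exp x <= exp y.
Proof. intros H. destruct (Rle_lt_or_eq_dec _ _ H). left; apply exp_increasing; auto. subst; lra. Qed.

Definition EV (g : nat -> option R -> R) (L : list outcome) : R :=
  fold_right (fun o acc => match o with (q, l, w) => q * g l w + acc end) 0 L.

Lemma EV_app g L1 L2 : EV g (L1 ++ L2) = EV g L1 + EV g L2.
Proof. induction L1 as [|[[q l] w] L1 IH]; simpl; [lra|]. rewrite IH; lra. Qed.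

Lemma EV_scale g p L : EV g (map (scale_out p) L) = p * EV g L.
Proof. induction L as [|[[q l] w] L IH]; simpl; [lra|]. rewrite IH; lra. Qed.

Lemma EV_addw g a L : EV g (map (addw_out a) L) = EV (fun l w => g l (oadd a w)) L.
Proof. induction L as [|[[q l] w] L IH]; simpl; [lra|]. rewrite IH; lra. Qed.

Lemma EV_ext g g' L : (forall l w, g l w = g' l w) -> EV g L = EV g' L.
Proof. intros H; induction L as [|[[q l] w] L IH]; simpl; [lra|]. rewrite IH, H; lra. Qed.

Lemma EV_flat g n F : EV g (flat_map F (seq 0 n)) = rsum n (fun j => EV g (F j)).
Proof. induction n; [reflexivity|]. rewrite seq_S, flat_map_app, EV_app, IHn. simpl.
  rewrite app_nil_r. auto. Qed.

Lemma EV_zero L : EV (fun _ _ => 0) L = 0.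
Proof. induction L as [|[[q l] w] L IH]; simpl; lra. Qed.

Lemma EV_rsum n G L : EV (fun l w => rsum n (fun i => G i l w)) L = rsum n (fun i => EV (G i) L).
Proof. induction L as [|[[q l] w] L IH]; simpl.
  - symmetry; apply rsum_zero; auto.
  - rewrite IH. rewrite <- rsum_scal, <- rsum_plus. auto. Qed.

Lemma EV_scal c g L : EV (fun l w => c * g l w) L = c * EV g L.
Proof. induction L as [|[[q l] w] L IH]; simpl; [lra|]. rewrite IH; lra. Qed.

Lemma rsum_ge_term n f i : (forall j, (j < n)%nat -> 0 <= f j) -> (i < n)%nat -> f i <= rsum n f.
Proof. intros H Hi. rewrite <- (rsum_single n i (f i)) by auto. apply rsum_le.
  intros j Hj. destruct (Nat.eqb_spec j i); subst; auto. lra. Qed.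

Section Game.
Variables (k T : R) (d : nat).

Lemma run_bounds S : forall E i g, valid_strategy k T d E S -> (i < d)%nat ->
  (forall l w, (l < d)%nat -> 0 <= g l w <= 1) ->
  0 <= EV g (run d E S i) <= 1.
Proof.
  induction S as [|st S IH]; intros E i g HV Hi Hg.
  - simpl. specialize (Hg i (Some 0) Hi). lra.
  - destruct st as [B|E'].
    + simpl in HV. destruct HV as [[HB1 HB2] [_ HV]]. simpl. rewrite EV_flat.
      rewrite (rsum_ext _ _ (fun j => B j i * EV g (run d E S j))) by (intros; apply EV_scale).
      split.
      * apply rsum_nonneg. intros j Hj. specialize (IH E j g HV Hj Hg). specialize (HB1 j i Hj Hi). nra.
      * rewrite <- (HB2 i Hi). apply rsum_le. intros j Hj.
        specialize (IH E j g HV Hj Hg). specialize (HB1 j i Hj Hi). nra.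
    + simpl in HV. simpl. rewrite EV_addw. apply IH; auto.
Qed.

Variables (W : R) (phi : nat -> R).
Hypothesis phi01 : forall l, 0 <= phi l <= 1.

Definition gt (u : R) (l : nat) (w : option R) : R :=
  if successful W (oadd (Some u) w) then phi l else 0.

Definition V E S i u := EV (gt u) (run d E S i).

Lemma gt01 u l w : 0 <= gt u l w <= 1.
Proof. unfold gt. destruct successful; [apply phi01|lra]. Qed.

Lemma V01 E S i u : valid_strategy k T d E S -> (i < d)%nat -> 0 <= V E S i u <= 1.
Proof. intros. apply run_bounds; auto. intros; apply gt01. Qed.

Lemma bwidth_nonneg e : 0 <= bwidth k T e.
Proof. destruct e; simpl; [left; apply exp_pos|lra]. Qed.

Hypothesis kpos : 0 < k.
Hypothesis Tpos : 0 < T.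

Lemma invariant S : forall E, valid_strategy k T d E S -> forall u : nat -> R,
  rsum d (fun i => bwidth k T (E i) * exp (- u i / (k * T)) * V E S i (u i))
  <= exp (- W / (k * T)) * rsum d (fun i => bwidth k T (final_energies E S i) * phi i).
Proof.
  assert (kT : 0 < k * T) by nra.
  induction S as [|st S IH]; intros E HV u.
  - simpl. rewrite <- rsum_scal. apply rsum_le. intros i Hi.
    unfold V, gt; simpl. replace (u i + 0) with (u i) by ring. rewrite Rplus_0_r.
    pose proof (bwidth_nonneg (E i)). pose proof (phi01 i).
    destruct (Rle_dec W (u i)); rewrite Rmult_1_l.
    + assert (exp (- u i / (k * T)) <= exp (- W / (k * T))).
      { apply exp_le_mono. unfold Rdiv. apply Rmult_le_compat_r. left; apply Rinv_0_lt_compat; auto. lra. }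
      assert (0 <= bwidth k T (E i) * phi i) by nra.
      replace (bwidth k T (E i) * exp (- u i / (k * T)) * phi i) with (exp (- u i / (k * T)) * (bwidth k T (E i) * phi i)) by ring.
      apply Rmult_le_compat_r; auto.
    + rewrite Rmult_0_r. apply Rmult_le_pos; [left; apply exp_pos|]. apply Rmult_le_pos; lra.
  - destruct st as [B|E'].
    + simpl in HV. destruct HV as [[HB1 HB2] [HG HV]]. simpl final_energies.
      set (Z := rsum d (fun j => bwidth k T (E j))).
      assert (HZ : 0 <= Z) by (apply rsum_nonneg; intros; apply bwidth_nonneg).
      assert (RHS0 : 0 <= exp (- W / (k * T)) * rsum d (fun i => bwidth k T (final_energies E S i) * phi i)).
      { apply Rmult_le_pos. left; apply exp_pos. apply rsum_nonneg. intros.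
        pose proof (bwidth_nonneg (final_energies E S i)). pose proof (phi01 i). nra. }
      destruct (Req_dec Z 0) as [Z0|Z0].
      { rewrite rsum_zero; auto. intros i Hi.
        assert (bwidth k T (E i) = 0).
        { pose proof (rsum_ge_term d (fun j => bwidth k T (E j)) i ltac:(intros; apply bwidth_nonneg) Hi).
          fold Z in H. pose proof (bwidth_nonneg (E i)). lra. }
        rewrite H; ring. }
      assert (Hrow : forall j, (j < d)%nat -> rsum d (fun i => B j i * bwidth k T (E i)) = bwidth k T (E j)).
      { intros j Hj. specialize (HG j Hj). unfold gibbs_vec in HG. fold Z in HG.
        rewrite (rsum_ext _ _ (fun i => / Z * (B j i * bwidth k T (E i)))) in HG
          by (intros; unfold Rdiv; ring).
        rewrite rsum_scal in HG. unfold Rdiv in HG.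
        apply (Rmult_eq_reg_l (/ Z)). lra. apply Rinv_neq_0_compat; auto. }
      set (Phi := fun j i => exp (- u i / (k * T)) * V E S j (u i)).
      set (a := fun j => argmax (Phi j) d).
      eapply Rle_trans; [|apply (IH E HV (fun j => u (a j)))].
      assert (dpos : (0 < d)%nat) by (destruct d; [simpl in Z; unfold Z in Z0; simpl in Z0; lra| lia]).
      transitivity (rsum d (fun i => rsum d (fun j => B j i * bwidth k T (E i) * Phi j i))).
      { right. apply rsum_ext. intros i Hi. unfold V at 1. simpl run. rewrite EV_flat.
        rewrite (rsum_ext _ _ (fun j => B j i * EV (gt (u i)) (run d E S j))) by (intros; apply EV_scale).
        rewrite <- rsum_scal. apply rsum_ext. intros j Hj. unfold Phi, V. ring. }
      rewrite rsum_swap. apply rsum_le. intros j Hj.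
      destruct (argmax_spec (Phi j) d dpos) as [Ha1 Ha2].
      transitivity (rsum d (fun i => B j i * bwidth k T (E i)) * Phi j (a j)).
      { rewrite Rmult_comm, <- rsum_scal. apply rsum_le. intros i Hi.
        specialize (Ha2 i Hi). specialize (HB1 j i Hj Hi). pose proof (bwidth_nonneg (E i)).
        fold (a j) in Ha2. assert (0 <= B j i * bwidth k T (E i)) by nra. nra. }
      rewrite Hrow by auto. unfold Phi. right; ring.
    + simpl in HV. simpl final_energies.
      set (u' := fun i => match E i, E' i with Some x, Some y => u i + (x - y) | _, _ => u i end).
      eapply Rle_trans; [|apply (IH E' HV u')]. apply rsum_le. intros i Hi.
      assert (Hnn : 0 <= bwidth k T (E' i) * exp (- u' i / (k * T)) * V E' S i (u' i)).
      { pose proof (V01 E' S i (u' i) HV Hi). pose proof (bwidth_nonneg (E' i)).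
        pose proof (exp_pos (- u' i / (k * T))). apply Rmult_le_pos; [|lra]. nra. }
      unfold V at 1. simpl run. rewrite EV_addw.
      unfold u' in *. destruct (E i) as [x|] eqn:Ex; [destruct (E' i) as [y|] eqn:Ey|].
      * simpl step_work. replace (EV _ _) with (V E' S i (u i + (x - y))).
        { simpl bwidth. right. f_equal. rewrite <- !exp_plus. f_equal. field. lra. }
        unfold V. apply EV_ext. intros l w. unfold gt. destruct w; simpl; [rewrite Rplus_assoc|]; auto.
      * simpl step_work. rewrite (EV_ext _ (fun _ _ => 0)). rewrite EV_zero. lra.
        intros l w. unfold gt. destruct w; simpl; auto.
      * simpl bwidth. lra.
Qed.

End Game.

Lemma rsum_pick n f l : rsum n (fun i => f i * (if Nat.eqb l i then 1 else 0)) = if Nat.ltb l n then f l else 0.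
Proof. induction n; simpl; [lra|]. rewrite IHn. destruct (Nat.eqb_spec l n).
  - subst. destruct (Nat.ltb_spec n n); [lia|]. destruct (Nat.ltb_spec n (S n)); [|lia]. lra.
  - destruct (Nat.ltb_spec l n); destruct (Nat.ltb_spec l (S n)); try lia; lra. Qed.

Lemma psa_EV d E lam S W i : prob_success_at d E lam S W i =
  EV (fun l w => if successful W w then (if Nat.eqb l i then 1 else 0) else 0) (outcomes d E lam S).
Proof. unfold prob_success_at. induction (outcomes d E lam S) as [|[[q l] w] L IH]; simpl; [lra|].
  rewrite IH. destruct (successful W w); [destruct (Nat.eqb l i)|]; lra. Qed.

Lemma ps_EV d E lam S W : prob_success d E lam S W =
  EV (fun l w => if successful W w then 1 else 0) (outcomes d E lam S).
Proof. unfold prob_success. induction (outcomes d E lam S) as [|[[q l] w] L IH]; simpl; [lra|].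
  rewrite IH. destruct (successful W w); lra. Qed.

Lemma h_ineq (k T : R) (d : nat) (E F : nat -> energy) (lam nu : nat -> R)
  (eps W : R) (S : strategy) :
  0 < k -> 0 < T ->
  is_state d E lam -> is_state d F nu ->
  0 <= eps < 1 ->
  valid_strategy k T d E S ->
  (forall i, (i < d)%nat -> final_energies E S i = F i) ->
  1 - eps <= prob_success d E lam S W ->
  (forall i, (i < d)%nat ->
     prob_success_at d E lam S W i / prob_success d E lam S W = nu i) ->
  forall mu, 0 <= mu ->
  rsum d (fun i => ppos ((1 - eps) * nu i - mu * exp (- W / (k * T)) * bwidth k T (F i)))
  <= rsum d (fun i => ppos (lam i - mu * bwidth k T (E i))).
Proof.
  intros kp Tp [_ [Hl0 [Hl1 Hl2]]] [_ [Hn0 [Hn1 Hn2]]] Heps HV Hfin Hs Hnu mu Hmu.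
  set (s := prob_success d E lam S W) in *.
  set (e := exp (- W / (k * T))).
  assert (He : 0 < e) by apply exp_pos.
  assert (Hpsa : forall i, (i < d)%nat -> prob_success_at d E lam S W i = s * nu i).
  { intros i Hi. rewrite <- (Hnu i Hi). field. lra. }
  set (phi := fun l => if Nat.ltb l d then (if Rle_dec (mu * e * bwidth k T (F l)) (s * nu l) then 1 else 0) else 0).
  assert (phi01 : forall l, 0 <= phi l <= 1).
  { intros l; unfold phi. destruct Nat.ltb; [destruct Rle_dec|]; lra. }
  set (Vi := fun i => V d W phi E S i 0).
  assert (HV01 : forall i, (i < d)%nat -> 0 <= Vi i <= 1) by (intros; apply (V01 k T); auto).
  assert (Hst2 : rsum d (fun i => phi i * prob_success_at d E lam S W i) = rsum d (fun i => lam i * Vi i)).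
  { rewrite (rsum_ext _ _ (fun i => EV (fun l w => phi i * (if successful W w then (if Nat.eqb l i then 1 else 0) else 0)) (outcomes d E lam S))).
    2:{ intros i Hi. rewrite psa_EV, EV_scal. auto. }
    rewrite <- EV_rsum. unfold outcomes. rewrite EV_flat.
    apply rsum_ext. intros i Hi. rewrite EV_scale. f_equal. unfold Vi, V. apply EV_ext.
    intros l w. unfold gt.
    assert (successful W (oadd (Some 0) w) = successful W w) as ->.
    { destruct w; simpl; auto. rewrite Rplus_0_l; auto. }
    destruct (successful W w).
      rewrite rsum_pick. unfold phi. destruct (Nat.ltb l d); auto.
    - apply rsum_zero. intros; ring. }
  assert (Hinv := invariant k T d W phi phi01 kp Tp S E HV (fun _ => 0)).
  rewrite (rsum_ext _ _ (fun i => bwidth k T (E i) * Vi i)) in Hinv.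
  2:{ intros i Hi. unfold Vi. replace (- 0 / (k * T)) with 0 by (field; nra). rewrite exp_0. ring. }
  rewrite (rsum_ext _ (fun i => bwidth k T (final_energies E S i) * phi i) (fun i => bwidth k T (F i) * phi i)) in Hinv
    by (intros; rewrite Hfin; auto).
  fold e in Hinv.
  assert (Hst3 : rsum d (fun i => lam i * Vi i) <= rsum d (fun i => ppos (lam i - mu * bwidth k T (E i))) + mu * rsum d (fun i => bwidth k T (E i) * Vi i)).
  { rewrite <- rsum_scal, <- rsum_plus. apply rsum_le. intros i Hi.
    specialize (HV01 i Hi). pose proof (pos_ge (lam i - mu * bwidth k T (E i))).
    pose proof (pos_ge0 (lam i - mu * bwidth k T (E i))).
    assert ((lam i - mu * bwidth k T (E i)) * Vi i <= ppos (lam i - mu * bwidth k T (E i))).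
    { destruct (Rle_dec 0 (lam i - mu * bwidth k T (E i))). nra. nra. }
    nra. }
  assert (Hs0 : 0 < s) by lra.
  transitivity (rsum d (fun i => phi i * (s * nu i - mu * e * bwidth k T (F i)))).
  { apply rsum_le. intros i Hi. unfold phi. destruct (Nat.ltb_spec i d); [|lia].
    specialize (Hn0 i Hi).
    destruct (Rle_dec (mu * e * bwidth k T (F i)) (s * nu i)).
    - rewrite Rmult_1_l. replace (mu * exp (- W / (k * T))) with (mu * e) by reflexivity.
      assert (Hp : ppos ((1 - eps) * nu i - mu * e * bwidth k T (F i)) <= ppos (s * nu i - mu * e * bwidth k T (F i))).
      { apply pos_mono. nra. }
      rewrite (pos_of_nonneg (s * nu i - mu * e * bwidth k T (F i))) in Hp by lra. fold e. auto.
    - rewrite Rmult_0_l. apply Req_le. apply pos_of_nonpos. fold e. nra. }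
  rewrite (rsum_ext _ _ (fun i => phi i * prob_success_at d E lam S W i + (- (mu * e)) * (bwidth k T (F i) * phi i))).
  2:{ intros i Hi. rewrite Hpsa by auto. ring. }
  rewrite rsum_plus, rsum_scal, Hst2.
  assert (mu * rsum d (fun i => bwidth k T (E i) * Vi i) <= mu * (e * rsum d (fun i => bwidth k T (F i) * phi i))).
  { apply Rmult_le_compat_l; auto. }
  lra.
Qed.

Definition ov (s c X : R) := Rmax 0 (Rmin X (s + c) - s).

Lemma ov_nonneg s c X : 0 <= ov s c X.
Proof. unfold ov; apply Rmax_l. Qed.
Lemma ov_le_c s c X : 0 <= c -> ov s c X <= c.
Proof. unfold ov, Rmax, Rmin; intros; repeat destruct Rle_dec; lra. Qed.
Lemma ov_le_Xs s c X : 0 <= X - s -> ov s c X <= X - s.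
Proof. unfold ov, Rmax, Rmin; intros; repeat destruct Rle_dec; lra. Qed.
Lemma ov_zero s c X : X <= s -> ov s c X = 0.
Proof. unfold ov, Rmax, Rmin; intros; repeat destruct Rle_dec; lra. Qed.
Lemma ov_full s c X : 0 <= c -> s + c <= X -> ov s c X = c.
Proof. unfold ov, Rmax, Rmin; intros; repeat destruct Rle_dec; lra. Qed.
Lemma ov_mid s c X : s <= X <= s + c -> ov s c X = X - s.
Proof. unfold ov, Rmax, Rmin; intros; repeat destruct Rle_dec; lra. Qed.
Lemma ov_le_X s c X : 0 <= s -> 0 <= X -> ov s c X <= X.
Proof. unfold ov, Rmax, Rmin; intros; repeat destruct Rle_dec; lra. Qed.
Lemma ov_lip s c X X' : X' <= X -> ov s c X <= ov s c X' + (X - X').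
Proof. unfold ov, Rmax, Rmin; intros; repeat destruct Rle_dec; lra. Qed.

Section Blocks.
Variables (k T : R) (d : nat) (E : nat -> energy) (lam : nat -> R).
Hypothesis kpos : 0 < k.
Hypothesis Tpos : 0 < T.
Hypothesis lam0 : forall i, (i < d)%nat -> 0 <= lam i.
Hypothesis lamN : forall i, (i < d)%nat -> E i = None -> lam i = 0.
Hypothesis fin_ex : exists i, (i < d)%nat /\ E i <> None.

Let c i := bwidth k T (E i).
Let h i := bheight k T (E i) (lam i).
Let s i := bstart k T d E lam i.
Let bef j i := before k T E lam j i.
Let Z := rsum d c.

Lemma bef_iff j i : bef j i = true <-> E j <> None /\ (h i < h j \/ (h j = h i /\ (j < i)%nat)).
Proof. unfold bef, before, h. destruct (E j) as [a|].
  - destruct Rlt_dec as [r|r]; [split; auto; intros _; split; [discriminate|auto]|].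
    destruct Req_EM_T as [e|e].
    + destruct (Nat.ltb_spec j i) as [L|L]; split; intros HH; try discriminate; try (split; [discriminate|]); auto.
      destruct HH as [_ [HH|[_ HH]]]; lra || lia.
    + split; intros HH; try discriminate. destruct HH as [_ [HH|[HH _]]]; lra.
  - split; intros HH; [discriminate|]. destruct HH as [HH _]; congruence.
Qed.

Lemma bef_irrefl i : bef i i = false.
Proof. destruct (bef i i) eqn:H; auto. apply bef_iff in H. destruct H as [_ [H|[_ H]]]; lra || lia. Qed.

Lemma bef_trans a b x : bef a b = true -> bef b x = true -> bef a x = true.
Proof. rewrite !bef_iff. intros [Ha H1] [Hb H2]. split; auto.
  destruct H1 as [H1|[H1 H1']]; destruct H2 as [H2|[H2 H2']]; try (left; lra). right; split; [lra|lia]. Qed.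

Lemma bef_total i j : E i <> None -> E j <> None -> i <> j -> bef i j = true \/ bef j i = true.
Proof. intros Hi Hj Hij. rewrite !bef_iff.
  destruct (Rtotal_order (h i) (h j)) as [H|[H|H]]; auto.
  destruct (Nat.lt_total i j) as [H'|[H'|H']]; [left|lia|right]; split; auto; right; split; auto. Qed.

Lemma bef_h j i : bef j i = true -> h i <= h j.
Proof. rewrite bef_iff. intros [_ [H|[H _]]]; lra. Qed.

Lemma notbef_h i j : E i <> None -> bef i j = false -> h i <= h j.
Proof. intros Hi H. destruct (Rle_dec (h i) (h j)); auto.
  assert (bef i j = true) by (apply bef_iff; split; auto; left; lra). congruence. Qed.

Lemma bef_fin j i : bef j i = true -> E j <> None.
Proof. rewrite bef_iff; tauto. Qed.

Lemma c_pos i : E i <> None -> 0 < c i.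
Proof. unfold c. destruct (E i); [intros; simpl; apply exp_pos|congruence]. Qed.
Lemma c_nonneg i : 0 <= c i.
Proof. unfold c. apply bwidth_nonneg. Qed.
Lemma c_none i : E i = None -> c i = 0.
Proof. unfold c. intros ->; auto. Qed.

Lemma lam_hc i : E i <> None -> lam i = h i * c i.
Proof. unfold h, c. destruct (E i) as [a|]; [|congruence]. intros _. simpl.
  rewrite Rmult_assoc, <- exp_plus. replace (a / (k * T) + - a / (k * T)) with 0 by (field; nra).
  rewrite exp_0; ring. Qed.

Lemma h_nonneg i : (i < d)%nat -> 0 <= h i.
Proof. intros Hi. unfold h. destruct (E i); simpl; [|lra]. pose proof (lam0 i Hi). pose proof (exp_pos (r / (k*T))). nra. Qed.

Lemma s_def i : s i = rsum d (fun j => if bef j i then c j else 0).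
Proof. reflexivity. Qed.

Lemma s_nonneg i : 0 <= s i.
Proof. rewrite s_def. apply rsum_nonneg. intros j _. destruct (bef j i); [apply c_nonneg|lra]. Qed.

Lemma F2 j i : (j < d)%nat -> bef j i = true -> s j + c j <= s i.
Proof. intros Hj Hb. rewrite !s_def.
  rewrite <- (rsum_single d j (c j)) by auto. rewrite <- rsum_plus. apply rsum_le.
  intros m Hm. destruct (Nat.eqb_spec m j).
  - subst. rewrite bef_irrefl, Hb. lra.
  - destruct (bef m j) eqn:H1. rewrite (bef_trans _ _ _ H1 Hb). lra.
    destruct (bef m i); [pose proof (c_nonneg m)|]; lra. Qed.

Lemma s_le_Z i : (i < d)%nat -> s i + c i <= Z.
Proof. intros Hi. rewrite !s_def. unfold Z.
  rewrite <- (rsum_single d i (c i)) by auto. rewrite <- rsum_plus. apply rsum_le.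
  intros m Hm. destruct (Nat.eqb_spec m i).
  - subst. rewrite bef_irrefl. lra.
  - destruct (bef m i); pose proof (c_nonneg m); lra. Qed.

Lemma exists_k X : 0 <= X -> exists k0, (k0 < d)%nat /\ E k0 <> None /\ s k0 <= X /\
  forall j, (j < d)%nat -> E j <> None -> bef k0 j = true -> X < s j.
Proof.
  intros HX. destruct fin_ex as [i0 [Hi0 Hf0]].
  assert (dpos : (0 < d)%nat) by lia.
  set (key := fun j => match E j with Some _ => - s j | None => -(Z+1) end).
  destruct (argmax_spec key d dpos) as [Hm1 Hm2]. set (m := argmax key d) in *.
  assert (Hk0 : key i0 = - s i0) by (unfold key; destruct (E i0); congruence).
  pose proof (s_le_Z i0 Hi0). pose proof (c_nonneg i0). pose proof (Hm2 i0 Hi0).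
  assert (Hmf : E m <> None).
  { intros Hn. unfold key at 2 in H1. rewrite Hn in H1. lra. }
  assert (Hkm : key m = - s m) by (unfold key; destruct (E m); congruence).
  assert (Hsm : s m = 0).
  { rewrite s_def. apply rsum_zero. intros j Hj. destruct (bef j m) eqn:Hb; auto.
    exfalso. pose proof (F2 j m Hj Hb). pose proof (c_pos j (bef_fin _ _ Hb)).
    pose proof (Hm2 j Hj). unfold key at 1 in H4. destruct (E j) eqn:Ej; [|exact (bef_fin _ _ Hb Ej)].
    lra. }
  set (key2 := fun j => match E j with Some _ => if Rle_dec (s j) X then s j else -1 | None => -1 end).
  destruct (argmax_spec key2 d dpos) as [Hk1 Hk2]. set (k0 := argmax key2 d) in *.
  assert (H2 : 0 <= key2 k0).
  { specialize (Hk2 m Hm1). unfold key2 at 1 in Hk2. destruct (E m); [|congruence].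
    destruct Rle_dec; lra. }
  assert (Hk0f : E k0 <> None /\ s k0 <= X /\ key2 k0 = s k0).
  { unfold key2 in *. destruct (E k0); [|lra]. destruct Rle_dec; [|lra]. split; [discriminate|auto]. }
  destruct Hk0f as [Hk0f [Hk0s Hk0e]].
  exists k0. repeat split; auto.
  intros j Hj Hjf Hb. destruct (Rlt_dec X (s j)) as [|Hn]; auto. exfalso.
  pose proof (F2 k0 j Hk1 Hb). pose proof (c_pos k0 Hk0f).
  pose proof (Hk2 j Hj) as Hkj. rewrite Hk0e in Hkj. unfold key2 in Hkj.
  destruct (E j); [|congruence]. destruct (Rle_dec (s j) X); lra.
Qed.

Lemma no_after X k0 : (k0 < d)%nat -> E k0 <> None ->
  (forall j, (j < d)%nat -> E j <> None -> bef k0 j = true -> X < s j) ->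
  s k0 + c k0 <= X -> forall j, (j < d)%nat -> E j <> None -> bef k0 j = false.
Proof.
  intros Hk Hkf Hafter Hle j1 Hj1 Hj1f. destruct (bef k0 j1) eqn:Hb1; auto. exfalso.
  assert (dpos : (0 < d)%nat) by lia.
  set (key := fun j => match E j with Some _ => if bef k0 j then - s j else -(Z+1) | None => -(Z+1) end).
  destruct (argmax_spec key d dpos) as [Hm1 Hm2]. set (j0 := argmax key d) in *.
  pose proof (s_le_Z j1 Hj1). pose proof (c_nonneg j1). pose proof (Hm2 j1 Hj1).
  assert (Hkj1 : key j1 = - s j1) by (unfold key; destruct (E j1); [rewrite Hb1|]; congruence).
  assert (Hj0 : E j0 <> None /\ bef k0 j0 = true /\ key j0 = - s j0).
  { rewrite Hkj1 in H1. unfold key in H1 |- *. destruct (E j0); [|lra]. destruct (bef k0 j0); [|lra]. split; [discriminate|auto]. }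
  destruct Hj0 as [Hj0f [Hj0b Hj0k]].
  assert (s j0 <= s k0 + c k0).
  { rewrite !s_def. rewrite <- (rsum_single d k0 (c k0)) by auto. rewrite <- rsum_plus.
    apply rsum_le. intros m Hm. destruct (bef m j0) eqn:Hbm.
    - destruct (bef m k0) eqn:Hbk. destruct (Nat.eqb m k0); pose proof (c_nonneg k0); lra.
      destruct (Nat.eqb_spec m k0). subst; lra. exfalso.
      pose proof (bef_fin _ _ Hbm) as Hmf.
      destruct (bef_total m k0 Hmf Hkf n) as [H3|H3]; [congruence|].
      pose proof (Hm2 m Hm) as Hkm. rewrite Hj0k in Hkm. unfold key in Hkm. destruct (E m); [|congruence]. rewrite H3 in Hkm.
      pose proof (F2 m j0 Hm Hbm). pose proof (c_pos m (bef_fin _ _ Hbm)). lra.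
    - destruct (bef m k0); destruct (Nat.eqb m k0); pose proof (c_nonneg m); pose proof (c_nonneg k0); lra. }
  pose proof (Hafter j0 Hm1 Hj0f Hj0b). lra.
Qed.

Definition Iof (a : nat -> R) (X : R) : R :=
  rsum d (fun i => match E i with None => 0 | Some _ => a i * ov (s i) (c i) X end).

Lemma sum_ov X : 0 <= X -> Iof (fun _ => 1) X <= X.
Proof.
  intros HX. destruct (exists_k X HX) as [k0 [Hk [Hkf [Hks Hkaft]]]].
  set (t := fun i => (if bef i k0 then c i else 0) + (if Nat.eqb i k0 then X - s k0 else 0)).
  assert (rsum d t = X).
  { unfold t. rewrite rsum_plus. rewrite (rsum_single d k0 (X - s k0)) by auto. rewrite <- s_def. ring. }
  transitivity (rsum d t); [|lra]. unfold Iof. apply rsum_le. intros i Hi. unfold t.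
  destruct (E i) eqn:Ei.
  - assert (Hif : E i <> None) by congruence. rewrite Rmult_1_l.
    destruct (Nat.eqb_spec i k0).
    + rewrite e. rewrite bef_irrefl. rewrite Rplus_0_l. apply ov_le_Xs. lra.
    + destruct (bef i k0) eqn:Hb.
      * pose proof (ov_le_c (s i) (c i) X (c_nonneg i)). lra.
      * destruct (bef_total i k0 Hif Hkf n) as [H1|H1]; [congruence|].
        rewrite ov_zero. lra. pose proof (Hkaft i Hi Hif H1). lra.
  - assert (bef i k0 = false). { destruct (bef i k0) eqn:Hb; auto. pose proof (bef_fin _ _ Hb); congruence. }
    rewrite H0. destruct (Nat.eqb_spec i k0); [rewrite e in Ei; congruence|]. lra.
Qed.

Lemma weak X mu : 0 <= X -> 0 <= mu ->
  Iof h X <= mu * X + rsum d (fun i => ppos (lam i - mu * c i)).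
Proof.
  intros HX Hmu. pose proof (sum_ov X HX).
  transitivity (mu * Iof (fun _ => 1) X + rsum d (fun i => ppos (lam i - mu * c i))).
  2:{ apply Rplus_le_compat_r. apply Rmult_le_compat_l; auto. }
  unfold Iof. rewrite <- rsum_scal, <- rsum_plus. apply rsum_le. intros i Hi.
  destruct (E i) eqn:Ei.
  - assert (Hif : E i <> None) by congruence. rewrite (lam_hc i Hif).
    replace (h i * c i - mu * c i) with (c i * (h i - mu)) by ring.
    rewrite pos_scal by apply c_nonneg.
    pose proof (ov_nonneg (s i) (c i) X). pose proof (ov_le_c (s i) (c i) X (c_nonneg i)).
    pose proof (pos_ge (h i - mu)). pose proof (pos_ge0 (h i - mu)).
    assert ((h i - mu) * ov (s i) (c i) X <= ppos (h i - mu) * c i) by nra. nra.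
  - rewrite Rmult_0_r, Rplus_0_l. apply pos_ge0.
Qed.

Lemma strong X : 0 <= X -> exists mu, 0 <= mu /\
  mu * X + rsum d (fun i => ppos (lam i - mu * c i)) <= Iof h X.
Proof.
  intros HX. destruct (exists_k X HX) as [k0 [Hk [Hkf [Hks Hkaft]]]].
  destruct (Rlt_dec X (s k0 + c k0)) as [Hlt|Hge].
  - exists (h k0). split; [apply h_nonneg; auto|].
    set (t := fun i => (if bef i k0 then c i else 0) + (if Nat.eqb i k0 then X - s k0 else 0)).
    assert (Ht : rsum d t = X).
    { unfold t. rewrite rsum_plus. rewrite (rsum_single d k0 (X - s k0)) by auto. rewrite <- s_def. ring. }
    rewrite <- Ht at 1. rewrite <- rsum_scal, <- rsum_plus. unfold Iof. apply rsum_le. intros i Hi. unfold t.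
    destruct (E i) eqn:Ei.
    + assert (Hif : E i <> None) by congruence. rewrite (lam_hc i Hif).
      replace (h i * c i - h k0 * c i) with (c i * (h i - h k0)) by ring.
      rewrite pos_scal by apply c_nonneg.
      destruct (Nat.eqb_spec i k0).
      * rewrite e. rewrite bef_irrefl. rewrite ov_mid by lra. rewrite Rminus_diag, pos_of_nonneg by lra. lra.
      * destruct (bef i k0) eqn:Hb.
        -- pose proof (bef_h _ _ Hb). rewrite pos_of_nonneg by lra.
           rewrite ov_full. lra. apply c_nonneg. pose proof (F2 i k0 Hi Hb). lra.
        -- pose proof (notbef_h i k0 Hif Hb). rewrite pos_of_nonpos by lra.
           pose proof (h_nonneg i Hi). pose proof (ov_nonneg (s i) (c i) X). nra.
    + assert (bef i k0 = false). { destruct (bef i k0) eqn:Hb; auto. pose proof (bef_fin _ _ Hb); congruence. }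
      rewrite H. destruct (Nat.eqb_spec i k0); [rewrite e in Ei; congruence|].
      rewrite (lamN i Hi Ei), (c_none i Ei). rewrite pos_of_nonneg by lra. lra.
  - assert (Hle : s k0 + c k0 <= X) by lra.
    pose proof (no_after X k0 Hk Hkf Hkaft Hle) as Hna.
    exists 0. split; [lra|]. rewrite Rmult_0_l, Rplus_0_l. unfold Iof. apply rsum_le. intros i Hi.
    destruct (E i) eqn:Ei.
    + assert (Hif : E i <> None) by congruence. rewrite Rmult_0_l, Rminus_0_r.
      rewrite pos_of_nonneg by (apply lam0; auto). rewrite (lam_hc i Hif).
      rewrite ov_full; [lra|apply c_nonneg|].
      destruct (Nat.eqb_spec i k0); [subst; lra|].
      destruct (bef i k0) eqn:Hb. pose proof (F2 i k0 Hi Hb); lra.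
      destruct (bef_total i k0 Hif Hkf n) as [H1|H1]; [congruence|]. rewrite (Hna i Hi Hif) in H1. discriminate.
    + rewrite (lamN i Hi Ei). rewrite Rmult_0_l, Rminus_0_r, pos_of_nonneg; lra.
Qed.

Lemma Iof_total X : Z <= X -> Iof h X = rsum d lam.
Proof.
  intros HX. unfold Iof. apply rsum_ext. intros i Hi. destruct (E i) eqn:Ei.
  - assert (Hif : E i <> None) by congruence. rewrite (lam_hc i Hif). rewrite ov_full; auto.
    apply c_nonneg. pose proof (s_le_Z i Hi). lra.
  - rewrite (lamN i Hi Ei). auto.
Qed.

Lemma Iof_le a X : (forall i, (i < d)%nat -> 0 <= a i) -> 0 <= X ->
  Iof a X <= X * rsum d (fun i => match E i with None => 0 | Some _ => a i end).
Proof.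
  intros Ha HX. unfold Iof. rewrite <- rsum_scal. apply rsum_le. intros i Hi.
  destruct (E i); [|lra]. pose proof (ov_le_X (s i) (c i) X (s_nonneg i) HX). pose proof (Ha i Hi).
  pose proof (ov_nonneg (s i) (c i) X). nra.
Qed.

Lemma Iof_lip a X X' : (forall i, (i < d)%nat -> 0 <= a i) -> X' <= X ->
  Iof a X <= Iof a X' + (X - X') * rsum d (fun i => match E i with None => 0 | Some _ => a i end).
Proof.
  intros Ha HX. unfold Iof. rewrite <- rsum_scal, <- rsum_plus. apply rsum_le. intros i Hi.
  destruct (E i); [|lra]. pose proof (ov_lip (s i) (c i) X X' HX). pose proof (Ha i Hi). nra.
Qed.

Lemma Iof_nonneg a X : (forall i, (i < d)%nat -> 0 <= a i) -> 0 <= Iof a X.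
Proof. intros Ha. unfold Iof. apply rsum_nonneg. intros i Hi. destruct (E i); [|lra].
  pose proof (Ha i Hi). pose proof (ov_nonneg (s i) (c i) X). nra. Qed.

End Blocks.

Lemma is_RInt_eqv (f : R -> R) a b (l l' : R) : is_RInt f a b l -> l = l' -> is_RInt f a b l'.
Proof. intros H ->; auto. Qed.

Lemma const_int (f : R -> R) a u v : u <= v -> (forall x, u < x < v -> f x = a) ->
  is_RInt f u v ((v - u) * a).
Proof. intros Huv H. apply (is_RInt_ext (fun _ => a)).
  - rewrite Rmin_left, Rmax_right by lra. intros x Hx. symmetry; apply H; auto.
  - exact (is_RInt_const u v a). Qed.

Lemma RInt_block s c a X : 0 <= s -> 0 <= c -> 0 <= X ->
  is_RInt (fun x => if Rle_dec s x then if Rlt_dec x (s + c) then a else 0 else 0) 0 X (a * ov s c X).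
Proof.
  intros Hs Hc HX.
  destruct (Rle_dec X s) as [H1|H1].
  - rewrite ov_zero by auto. eapply is_RInt_eqv; [apply (const_int _ 0); [lra|] |].
    intros x Hx. destruct Rle_dec; [lra|auto]. ring.
  - destruct (Rle_dec X (s + c)) as [H2|H2].
    + rewrite ov_mid by lra.
      eapply is_RInt_eqv. eapply is_RInt_Chasles with (b := s).
      * apply (const_int _ 0); auto. intros x Hx. destruct Rle_dec; [lra|auto].
      * apply (const_int _ a). lra. intros x Hx. destruct Rle_dec; [|lra]. destruct Rlt_dec; [auto|lra].
      * change (plus ((s - 0) * 0) ((X - s) * a) = a * (X - s)). unfold plus; simpl. ring.
    + rewrite ov_full by lra.
      eapply is_RInt_eqv. eapply is_RInt_Chasles with (b := s + c).
      eapply is_RInt_Chasles with (b := s).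
      * apply (const_int _ 0); auto. intros x Hx. destruct Rle_dec; [lra|auto].
      * apply (const_int _ a). lra. intros x Hx. destruct Rle_dec; [|lra]. destruct Rlt_dec; [auto|lra].
      * apply (const_int _ 0). lra. intros x Hx. destruct Rle_dec; [|lra]. destruct Rlt_dec; [lra|auto].
      * unfold plus; simpl. ring.
Qed.

Lemma RInt_rsum n (G : nat -> R -> R) (v : nat -> R) a b :
  (forall i, (i < n)%nat -> is_RInt (G i) a b (v i)) ->
  is_RInt (fun x => rsum n (fun i => G i x)) a b (rsum n v).
Proof.
  induction n; intros H; simpl.
  - eapply is_RInt_eqv. apply is_RInt_const. unfold scal; simpl. unfold mult; simpl. ring.
  - eapply is_RInt_eqv. apply (is_RInt_plus (fun x => rsum n (fun i => G i x)) (G n)).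
    apply IHn; intros; apply H; lia. apply H; lia. reflexivity.
Qed.

Lemma gibbs_int k T d E lam X : 0 < k -> 0 < T -> 0 <= X ->
  is_RInt (gibbs_rescaling k T d E lam) 0 X (Iof k T d E lam (fun i => bheight k T (E i) (lam i)) X).
Proof.
  intros kp Tp HX. unfold gibbs_rescaling, Iof. apply RInt_rsum. intros i Hi.
  destruct (E i) eqn:Ei.
  - apply RInt_block; auto. apply rsum_nonneg. intros j _. destruct before; [apply bwidth_nonneg|lra].
    apply bwidth_nonneg.
  - eapply is_RInt_eqv. apply is_RInt_const. unfold scal; simpl. unfold mult; simpl. ring.
Qed.

Lemma integral0_of f l v : is_RInt f 0 l v -> integral0 f l v.
Proof. intros H. exists (ex_RInt_Reals_0 f 0 l (ex_intro _ v H)).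
  rewrite <- RInt_Reals. apply is_RInt_unique; auto. Qed.

Lemma integral0_uniq f l v1 v : integral0 f l v1 -> is_RInt f 0 l v -> v1 = v.
Proof. intros [pr <-] H. rewrite <- RInt_Reals. apply is_RInt_unique; auto. Qed.

Lemma is_RInt_div (f : R -> R) a b v r : is_RInt f a b v -> is_RInt (fun x => f x / r) a b (v / r).
Proof. intros H.
  assert (H2 : is_RInt (fun y => / r * f y) a b (/ r * v)) by exact (is_RInt_scal f a b (/ r) v H).
  eapply is_RInt_eqv; [|unfold Rdiv; apply Rmult_comm].
  apply (is_RInt_ext (fun y => / r * f y)); auto.
  intros; unfold Rdiv; apply Rmult_comm. Qed.

Theorem theorem1 (k T : R) (d : nat) (E F : nat -> energy) (lam nu : nat -> R)
  (eps W : R) (S : strategy) :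
  0 < k -> 0 < T ->
  is_state d E lam -> is_state d F nu ->
  0 <= eps < 1 ->
  valid_strategy k T d E S ->
  (forall i, (i < d)%nat -> final_energies E S i = F i) ->
  1 - eps <= prob_success d E lam S W ->
  (forall i, (i < d)%nat ->
     prob_success_at d E lam S W i / prob_success d E lam S W = nu i) ->
  exists Mv,
    is_rel_mixedness (fun x => gibbs_rescaling k T d E lam x / (1 - eps))
                     (gibbs_rescaling k T d F nu) Mv /\
    W <= k * T * ln Mv.
Proof.
  intros kp Tp HsE HsF Heps HV Hfin Hs Hnu.
  pose proof (h_ineq k T d E F lam nu eps W S kp Tp HsE HsF Heps HV Hfin Hs Hnu) as Hh.
  destruct HsE as [finE [lam0 [lam1 lamN]]]. destruct HsF as [finF [nu0 [nu1 nuN]]].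
  assert (kT : 0 < k * T) by nra.
  assert (He : 0 < 1 - eps) by lra.
  set (fG := fun x => gibbs_rescaling k T d E lam x / (1 - eps)).
  set (gG := gibbs_rescaling k T d F nu).
  set (Ir := Iof k T d E lam (fun i => bheight k T (E i) (lam i))).
  set (Ig := Iof k T d F nu (fun i => bheight k T (F i) (nu i))).
  assert (intf : forall l, 0 <= l -> is_RInt fG 0 l (Ir l / (1 - eps))).
  { intros l Hl. apply is_RInt_div. apply gibbs_int; auto. }
  assert (intg : forall X, 0 <= X -> is_RInt gG 0 X (Ig X)).
  { intros X HX. apply gibbs_int; auto. }
  assert (adm_iff : forall m, mixedness_admissible fG gG m <-> 0 < m /\ forall l, 0 <= l -> Ig (l * m) <= Ir l / (1 - eps)).
  { intros m. split.
    - intros [Hm H]. split; auto. intros l Hl. destruct (H l Hl) as [v1 [v2 [H1 [H2 H3]]]].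
      rewrite <- (integral0_uniq _ _ _ _ H1 (intf l Hl)).
      rewrite <- (integral0_uniq _ _ _ _ H2 (intg (l * m) ltac:(nra))). auto.
    - intros [Hm H]. split; auto. intros l Hl. exists (Ir l / (1 - eps)), (Ig (l * m)).
      split; [apply integral0_of, intf; auto|]. split; [apply integral0_of, intg; nra|]. apply H; auto. }
  set (m0 := exp (W / (k * T))).
  assert (Hm0 : 0 < m0) by apply exp_pos.
  assert (Hem0 : exp (- W / (k * T)) = / m0).
  { unfold m0. rewrite <- exp_Ropp. f_equal. field. lra. }
  assert (adm0 : mixedness_admissible fG gG m0).
  { apply adm_iff. split; auto. intros l Hl.
    destruct (strong k T d E lam kp Tp lam0 lamN finE l Hl) as [mu [Hmu Hst]]. fold Ir in Hst.
    set (mu' := mu / ((1 - eps) * m0)).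
    assert (Hmu' : 0 <= mu') by (unfold mu'; apply Rdiv_le_0_compat; nra).
    pose proof (weak k T d F nu kp Tp finF (l * m0) mu' ltac:(nra) Hmu') as Hw. fold Ig in Hw.
    specialize (Hh mu Hmu). rewrite Hem0 in Hh.
    assert (Heq : (1 - eps) * rsum d (fun i => ppos (nu i - mu' * bwidth k T (F i))) =
                  rsum d (fun i => ppos ((1 - eps) * nu i - mu * / m0 * bwidth k T (F i)))).
    { rewrite <- rsum_scal. apply rsum_ext. intros i Hi. rewrite <- pos_scal by lra. f_equal.
      unfold mu'. field. lra. }
    assert ((1 - eps) * Ig (l * m0) <= Ir l).
    { assert (Hx : (1 - eps) * (mu' * (l * m0)) = mu * l) by (unfold mu'; field; lra).
      assert ((1 - eps) * Ig (l * m0) <= (1 - eps) * (mu' * (l * m0) + rsum d (fun i => ppos (nu i - mu' * bwidth k T (F i))))).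
      { apply Rmult_le_compat_l; lra. }
      rewrite Rmult_plus_distr_l, Hx, Heq in H. lra. }
    apply (Rmult_le_reg_l (1 - eps)); auto. replace ((1 - eps) * (Ir l / (1 - eps))) with (Ir l) by (field; lra). auto. }
  set (Zs := rsum d (fun i => bwidth k T (F i))).
  set (Hr := rsum d (fun i => match E i with None => 0 | Some _ => bheight k T (E i) (lam i) end)).
  assert (hr0 : forall i, (i < d)%nat -> 0 <= bheight k T (E i) (lam i)).
  { intros i Hi. destruct (E i); simpl; [|lra]. pose proof (lam0 i Hi). pose proof (exp_pos (r / (k * T))). nra. }
  assert (hs0 : forall i, (i < d)%nat -> 0 <= bheight k T (F i) (nu i)).
  { intros i Hi. destruct (F i); simpl; [|lra]. pose proof (nu0 i Hi). pose proof (exp_pos (r / (k * T))). nra. }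
  assert (HZs : 0 <= Zs) by (apply rsum_nonneg; intros; apply bwidth_nonneg).
  assert (bnd : forall m, mixedness_admissible fG gG m -> m <= Zs * Hr / (1 - eps)).
  { intros m Hm. apply adm_iff in Hm. destruct Hm as [Hm H].
    specialize (H (Zs / m) ltac:(apply Rdiv_le_0_compat; lra)).
    replace (Zs / m * m) with Zs in H by (field; lra).
    unfold Ig in H. rewrite (Iof_total k T d F nu kp Tp nuN Zs) in H by (unfold Zs; lra).
    rewrite nu1 in H.
    pose proof (Iof_le k T d E lam (fun i => bheight k T (E i) (lam i)) (Zs / m) hr0 ltac:(apply Rdiv_le_0_compat; lra)).
    cbv beta in H0. fold Ir Hr in H0.
    assert (Hq : Ir (Zs / m) = (Ir (Zs / m) / (1 - eps)) * (1 - eps)) by (field; lra).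
    assert (1 * (1 - eps) <= Zs / m * Hr).
    { assert (1 * (1 - eps) <= Ir (Zs / m) / (1 - eps) * (1 - eps)) by (apply Rmult_le_compat_r; lra). lra. }
    apply (Rmult_le_reg_r (1 - eps)); auto. replace (Zs * Hr / (1 - eps) * (1 - eps)) with (Zs * Hr) by (field; lra).
    apply (Rmult_le_reg_l (/ m)). apply Rinv_0_lt_compat; lra.
    replace (/ m * (m * (1 - eps))) with (1 * (1 - eps)) by (field; lra).
    replace (/ m * (Zs * Hr)) with (Zs / m * Hr) by (field; lra). auto. }
  destruct (completeness (fun m => mixedness_admissible fG gG m)) as [M [HMub HMl]].
  { exists (Zs * Hr / (1 - eps)). intros m Hm. apply bnd; auto. }
  { exists m0; auto. }
  assert (HM0 : m0 <= M) by (apply HMub; auto).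
  set (Hsg := rsum d (fun i => match F i with None => 0 | Some _ => bheight k T (F i) (nu i) end)).
  assert (HHs : 0 <= Hsg).
  { apply rsum_nonneg. intros i Hi. pose proof (hs0 i Hi). destruct (F i); [auto|lra]. }
  assert (admM : mixedness_admissible fG gG M).
  { apply adm_iff. split; [lra|]. intros l Hl.
    destruct (Rle_dec (Ig (l * M)) (Ir l / (1 - eps))) as [|Hn]; auto. exfalso.
    set (delta := (Ig (l * M) - Ir l / (1 - eps)) / (Hsg * l + 1)).
    assert (Hd : 0 < delta) by (unfold delta; apply Rdiv_lt_0_compat; nra).
    destruct (classic (exists m, mixedness_admissible fG gG m /\ M - delta < m)) as [[m [Hm Hmd]]|Hno].
    - pose proof (HMub m Hm) as HmM. apply adm_iff in Hm. destruct Hm as [Hm Hm2].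
      pose proof (Hm2 l Hl).
      pose proof (Iof_lip k T d F nu (fun i => bheight k T (F i) (nu i)) (l * M) (l * m) hs0 ltac:(nra)).
      cbv beta in H0. fold Ig Hsg in H0.
      assert ((l * M - l * m) * Hsg <= l * delta * Hsg).
      { apply Rmult_le_compat_r; auto. nra. }
      assert (delta * (Hsg * l + 1) = Ig (l * M) - Ir l / (1 - eps)) by (unfold delta; field; nra).
      nra.
    - assert (M <= M - delta); [|lra]. apply HMl. intros m Hm.
      destruct (Rle_dec m (M - delta)); auto. exfalso. apply Hno. exists m. split; auto; lra. }
  exists M. split.
  - split; auto.
  - assert (ln m0 <= ln M).
    { destruct (Rle_lt_or_eq_dec _ _ HM0) as [H|H]; [left; apply ln_increasing; auto|rewrite H; lra]. }
    unfold m0 in H. rewrite ln_exp in H.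
    replace W with (k * T * (W / (k * T))) by (field; lra).
    apply Rmult_le_compat_l; lra.
Qed.
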